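(* Let $v\ge4$ be an integer with $v\not\equiv2\pmod 4$. Then an optimum $(d,2)$-CDA$((d+1)v^2;5,v)$ exists for every positive integer $d$ with $d+1\le v$.
   Context: Consecutive $t$-way interaction in an $N\times k$ array $A=(a_{ij})$ over a $v$-set $V$: $T=\{(i,x_i),\dots,(i+t-1,x_{i+t-1})\}$, $1\le i\le k-t+1$, $x_r\in V$; $\rho(A,T)=\{r: a_{r,j}=x_j\ \forall (j,x_j)\in T\}$, $\rho(A,\mathcal T)=\bigcup_{T\in\mathcal T}\rho(A,T)$. A $(d,t)$-CDA$(N;k,v)$ is an $N\times k$ array over $V$ in which every $t$ consecutive columns contain every $t$-tuple at least once, and such that for every set $\mathcal T$ of exactly $d$ distinct consecutive $t$-way interactions and every consecutive $t$-way interaction $T$: $\rho(A,T)\subseteq\rho(A,\mathcal T)$ iff $T\in\mathcal T$. It is optimum if $N=(d+1)v^t$. *)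

(* Defs.v *)
From mathcomp Require Import all_boot all_order all_algebra.
Set Implicit Arguments. Unset Strict Implicit. Unset Printing Implicit Defensive.

(* Columns are 0-indexed: 'I_k; symbols: V = 'I_v (a v-set).
   A t-way interaction is a set of (column, symbol) pairs. *)
Notation pairT k v := ('I_k * 'I_v)%type.

Definition cinter (k v t : nat) (T : {set pairT k v}) : Prop :=
  exists (i : nat) (x : 'I_k -> 'I_v),
    i + t <= k /\ T = [set p : pairT k v | (i <= p.1 < i + t) && (p.2 == x p.1)].

Definition rho (N k v : nat) (A : 'M['I_v]_(N, k)) (T : {set pairT k v})
  : {set 'I_N} := [set r : 'I_N | [forall p in T, A r p.1 == p.2]].

Definition rhoF (N k v : nat) (A : 'M['I_v]_(N, k)) (F : {set {set pairT k v}})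
  : {set 'I_N} := \bigcup_(T in F) rho A T.

Definition is_CDA (d t N k v : nat) (A : 'M['I_v]_(N, k)) : Prop :=
  (forall i : nat, i + t <= k -> forall x : 'I_t -> 'I_v,
     exists r : 'I_N, forall (j : 'I_t) (c : 'I_k), nat_of_ord c = i + j -> A r c = x j)
  /\
  (forall F : {set {set pairT k v}},
     (forall T, T \in F -> cinter t T) -> #|F| = d ->
     forall T, cinter t T -> (rho A T \subset rhoF A F <-> T \in F)).

Definition is_optimum_CDA (d t N k v : nat) (A : 'M['I_v]_(N, k)) : Prop :=
  is_CDA d t A /\ N = (d + 1) * v ^ t.

(* Main.v *)
Require Import Defs.
From mathcomp Require Import all_boot all_order all_algebra.
From mathcomp Require Import zify.
Import GRing.Theory.

Section Constr.
Variables n d : nat.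
Hypothesis hdv : d + 1 <= n.+2.

Definition K : finType := ('I_(d+1) * ('I_n.+2 * 'I_n.+2))%type.

Definition sig (s : 'I_(d+1)) : 'I_n.+2 := ((s : nat)%:R)%R.

Definition G (p : K) (j : nat) : 'I_n.+2 :=
  let s := sig p.1 in let a := p.2.1 in let b := p.2.2 in
  match j with 0 => a | 1 => b | 2 => (a + s)%R | 3 => (b+s)%R | _ => (a+s+s)%R end.

Lemma sig_inj : injective sig.
Proof.
move=> s t; rewrite /sig !Zp_nat => /(congr1 val) /=.
have hu : forall u : 'I_(d+1), u < n.+2 := fun u => leq_trans (ltn_ord u) hdv.
by rewrite !modn_small // => /val_inj.
Qed.

Lemma key_lt (i i' : nat) (p q : K) : i < i' -> i' <= 3 ->
  G p i = G q i -> G p i.+1 = G q i.+1 -> G p i' = G q i' -> G p i'.+1 = G q i'.+1 ->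
  p = q.
Proof.
case: p => s [a b]; case: q => s' [a' b'].
move=> hlt hle h1 h2 h3 h4.
suff [-> [-> /sig_inj ->]] : a = a' /\ b = b' /\ sig s = sig s' by [].
move: hlt hle h1 h2 h3 h4.
case: i => [|[|[|[|i]]]] //; case: i' => [|[|[|[|[|i']]]]] //= _ _.
- move=> e1 e2 _ e4; rewrite e1 in e4; split=> //; split=> //; exact: addrI e4.
- move=> e1 e2 e3 _; rewrite e1 in e3; split=> //; split=> //; exact: addrI e3.
- move=> e1 e2 e3 _; rewrite e2 in e3; split=> //; split=> //; exact: addrI e3.
- move=> e1 e2 _ e4; rewrite e1 in e4; have hs : sig s = sig s' by exact: addrI e4.
  rewrite hs in e2; split; [exact: addIr e2 | by split].
- move=> e1 e2 e3 _; rewrite e1 in e3; have hs : sig s = sig s' by exact: addrI e3.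
  rewrite hs in e2; split; [exact: addIr e2 | by split].
- move=> e1 e2 _ e4.
  have hs : sig s = sig s' by rewrite e1 in e4; exact: addrI e4.
  rewrite hs in e1 e2; split; first exact: addIr e1.
  split=> //; exact: addIr e2.
Qed.

Lemma key (i i' : nat) (p q : K) : i != i' -> i <= 3 -> i' <= 3 ->
  G p i = G q i -> G p i.+1 = G q i.+1 -> G p i' = G q i' -> G p i'.+1 = G q i'.+1 ->
  p = q.
Proof.
move=> hne hi hi'; case: (ltngtP i i') => h.
- exact: key_lt.
- move=> h1 h2 h3 h4; by apply: (@key_lt _ _ _ _ h hi h3 h4 h1 h2).
- by rewrite h eqxx in hne.
Qed.

Definition sol (i : nat) (s : 'I_(d+1)) (x0 x1 : 'I_n.+2) : K :=
  let sg := sig s in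
  match i with
  | 0 => (s, (x0, x1))
  | 1 => (s, ((x1 - sg)%R, x0))
  | 2 => (s, ((x0 - sg)%R, (x1 - sg)%R))
  | _ => (s, ((x1 - sg - sg)%R, (x0 - sg)%R))
  end.

Lemma sol_ok i s x0 x1 : i <= 3 -> G (sol i s x0 x1) i = x0 /\ G (sol i s x0 x1) i.+1 = x1.
Proof.
case: i => [|[|[|[|i]]]] //= _; rewrite ?subrK //.
Qed.

Lemma sol_s i s x0 x1 : (sol i s x0 x1).1 = s.
Proof. by case: i => [|[|[|i]]]. Qed.

End Constr.
Arguments G {n d}.
Arguments key {n d} hdv {i i' p q}.
Arguments sol_ok {n d i} s x0 x1.


Lemma rhoP N k v (A : 'M['I_v]_(N,k)) i t (x : 'I_k -> 'I_v) r :
  reflect (forall c : 'I_k, i <= c < i + t -> A r c = x c)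
   (r \in rho A [set p : pairT k v | (i <= p.1 < i + t) && (p.2 == x p.1)]).
Proof.
rewrite /rho inE; apply: (iffP forallP) => H.
- move=> c hc; have := H (c, x c); rewrite inE /= hc eqxx /=; by move/eqP.
- case=> c y; apply/implyP; rewrite inE /= => /andP [hc /eqP ->]; apply/eqP; exact: H.
Qed.

Lemma card_bigcup_le (T I : finType) (P : pred I) (F : I -> {set T}) :
  #|\bigcup_(i | P i) F i| <= \sum_(i | P i) #|F i|.
Proof.
elim/big_rec2: _; first by rewrite cards0.
move=> i S m _ h; apply: leq_trans (leq_card_setU _ _) _; exact: leq_add.
Qed.

Theorem mainTheorem17 (v : nat) (hv4 : 4 <= v) (hv : v %% 4 != 2) :
  forall d : nat, 0 < d -> d + 1 <= v ->
  exists A : 'M['I_v]_((d + 1) * v ^ 2, 5), is_optimum_CDA d 2 A.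
Proof.
case: v hv4 hv => [|[|n]] // hv4 _ d hd hdv.
have HN : (d + 1) * n.+2 ^ 2 = #|K n d|.
  by rewrite card_prod !card_ord card_prod !card_ord expnS expn1.
pose e (r : 'I_((d + 1) * n.+2 ^ 2)) : K n d := enum_val (cast_ord HN r).
pose er (k : K n d) : 'I_((d + 1) * n.+2 ^ 2) := cast_ord (esym HN) (enum_rank k).
have eK : cancel er e by move=> k; rewrite /e /er cast_ordKV enum_rankK.
have Ke : cancel e er by move=> r; rewrite /e /er enum_valK cast_ordK.
have einj : injective e := can_inj Ke.
pose A : 'M['I_n.+2]_((d + 1) * n.+2 ^ 2, 5) := (\matrix_(r, c) G (e r) c)%R.
have AE : forall r c, A r c = G (e r) c by move=> r c; rewrite mxE.
have rowP : forall i (x : 'I_5 -> 'I_n.+2) (r : 'I_((d + 1) * n.+2 ^ 2)), i + 2 <= 5 ->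
  (r \in rho A [set p : pairT 5 n.+2 | (i <= p.1 < i+2) && (p.2 == x p.1)]) <->
  (G (e r) i = x (inord i) /\ G (e r) i.+1 = x (inord i.+1)).
  move=> i x r hi; split.
  - move/rhoP => H; split.
    + have := H (inord i); rewrite AE inordK; last by lia.
      by apply; lia.
    + have := H (inord i.+1); rewrite AE inordK; last by lia.
      by apply; lia.
  - case=> h0 h1; apply/rhoP => c /andP [hc1 hc2]; rewrite AE.
    have : (c:nat) = i \/ (c:nat) = i.+1 by lia.
    case=> hc.
    + have ec : c = inord i by apply: val_inj; rewrite /= inordK //; lia.
      by rewrite ec inordK //; lia.
    + have ec : c = inord i.+1 by apply: val_inj; rewrite /= inordK //; lia.
      by rewrite ec inordK //; lia.
have lb : forall T, cinter 2 T -> d + 1 <= #|rho A T|.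
  move=> T [i [x [hi ->]]].
  pose f (s : 'I_(d+1)) := er (sol n d i s (x (inord i)) (x (inord i.+1))).
  have finj : injective f.
    move=> s t /(congr1 e); rewrite !eK => /(congr1 fst); by rewrite !sol_s.
  have : [set f s | s : 'I_(d+1)] \subset rho A [set p : pairT 5 n.+2 | (i <= p.1 < i+2) && (p.2 == x p.1)].
    apply/subsetP => r /imsetP [s _ ->]; apply/(rowP _ _ _ hi); rewrite eK.
    apply: sol_ok; lia.
  by move/subset_leq_card; rewrite card_imset // card_ord.
have ov : forall T1 T2, cinter 2 T1 -> cinter 2 T2 -> T1 != T2 ->
    #|rho A T1 :&: rho A T2| <= 1.
  move=> T1 T2 [i [x [hi ->]]] [i' [x' [hi' ->]]] hne.
  case: (eqVneq i i') => [eii | nii].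
  - subst i'.
    suff -> : rho A [set p : pairT 5 n.+2 | (i <= p.1 < i+2) && (p.2 == x p.1)] :&:
              rho A [set p : pairT 5 n.+2 | (i <= p.1 < i+2) && (p.2 == x' p.1)] = set0
      by rewrite cards0.
    apply/setP => r; rewrite in_setI in_set0; apply/negP.
    case/andP => /(rowP _ _ _ hi) [a0 a1] /(rowP _ _ _ hi) [b0 b1].
    move/eqP: hne; apply; apply/setP => [[c y]]; rewrite !inE /=.
    case hc: (i <= c < i+2) => //=.
    have : (c:nat) = i \/ (c:nat) = i.+1 by move/andP: hc => [? ?]; lia.
    case=> hc'.
    + have ec : c = inord i by apply: val_inj; rewrite /= inordK //; lia.
      by rewrite ec -a0 b0.
    + have ec : c = inord i.+1 by apply: val_inj; rewrite /= inordK //; lia.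
      by rewrite ec -a1 b1.
  - apply/card_le1_eqP => r1 r2; rewrite !in_setI.
    case/andP => /(rowP _ _ _ hi) [a0 a1] /(rowP _ _ _ hi') [b0 b1].
    case/andP => /(rowP _ _ _ hi) [c0 c1] /(rowP _ _ _ hi') [d0 d1].
    apply: einj; apply: (key hdv nii); try lia.
    + by rewrite a0 c0.
    + by rewrite a1 c1.
    + by rewrite b0 d0.
    + by rewrite b1 d1.
exists A; split; last by [].
split.
- move=> i hi x.
  pose z : 'I_(d+1) := @Ordinal (d+1) 0 (ltn_addl d (ltn0Sn 0)).
  exists (er (sol n d i z (x ord0) (x ord_max))).
  have hi3 : i <= 3 by lia.
  have [s0 s1] := sol_ok z (x ord0) (x ord_max) hi3.
  move=> j c hc; rewrite AE eK hc.
  case: j hc => [[|[|j]] hj] //= hc.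
  + rewrite addn0 s0; congr x; exact: val_inj.
  + rewrite addn1 s1; congr x; exact: val_inj.
- move=> F hF hcard T hT; split; last first.
    move=> hTF; exact: (bigcup_sup T hTF).
  move=> hsub; apply/negPn/negP => hTF.
  have h1 : rho A T \subset \bigcup_(T' in F) (rho A T :&: rho A T').
    apply/subsetP => r hr; have := subsetP hsub r hr; case/bigcupP => T' hT' hr'.
    by apply/bigcupP; exists T'; rewrite // in_setI hr hr'.
  have := leq_trans (lb T hT) (leq_trans (subset_leq_card h1) (card_bigcup_le _ _ _ _)).
  have h2 : \sum_(T' in F) #|rho A T :&: rho A T'| <= \sum_(T' in F) 1.
    apply: leq_sum => T' hT'; apply: ov => //; first exact: hF.
    by apply: contraNneq hTF => ->.
  move/leq_trans/(_ h2); rewrite sum1_card hcard; lia.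
Qed.
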